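(* Let $G=(V,E)$ be an undirected unweighted graph with $n$ vertices, let $f$ be a positive integer with $n>f$, and let $c\ge1$ be a constant. Let $A_0=V$ and, for $i=1,\dots,f-1$, let $A_i$ be obtained by including each vertex independently with probability $p_i=\min((c+3)n^{-i/f}\log n,1)$ (all choices independent). Say the sampling is good if (1) for every $i\in\{1,\dots,f-1\}$ and every $v\in V$, $Q_i(v)\cap A_i\neq\emptyset$, and (2) for every $i\in\{0,\dots,f-1\}$ and every $v\in V$, $|Q_{i+1}(v)\cap A_i|\le\lceil 12(c+3)n^{1/f}\log n\rceil$. Then the sampling is good with probability at least $1-n^{-c}$.
   Context: Logarithms are base $2$. Vertices have distinct identifiers $ID(\cdot)$ and $d(\cdot,\cdot)$ is hop distance. A vertex $x$ is closer to $v$ than $y$ if $d(v,x)<d(v,y)$, or $d(v,x)=d(v,y)$ and $ID(x)<ID(y)$. For $i\in\{1,\dots,f\}$ and $v\in V$, $Q_i(v)$ is the set of the $\lceil n^{i/f}\rceil$ vertices closest to $v$ in $G$. *)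

(* Defs.v *)
From HB Require Import structures.
From mathcomp Require Import all_boot all_order all_algebra.
From mathcomp Require Import reals exp.
Set Implicit Arguments. Unset Strict Implicit. Unset Printing Implicit Defensive.
Import Order.TTheory GRing.Theory Num.Theory.
Local Open Scope ring_scope.

Section Defs.
Variable n : nat.
(* An undirected unweighted graph on V = 'I_n is a symmetric irreflexive relation e. *)
Variable e : rel 'I_n.

Fixpoint ball (k : nat) (v : 'I_n) : {set 'I_n} :=
  match k with
  | 0 => [set v]
  | k'.+1 => ball k' v :|: [set y | [exists x in ball k' v, e x y]]
  end.

(* hop distance; an unreachable vertex gets distance n (> every finite distance),
   playing the role of +infinity *)
Definition dist (v x : 'I_n) : nat := find (fun k => x \in ball k v) (iota 0 n).

Definition closer (ID : 'I_n -> nat) (v x y : 'I_n) : bool :=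
  (dist v x < dist v y)%N || ((dist v x == dist v y) && (ID x < ID y)%N).

Definition closestK (ID : 'I_n -> nat) (K : nat) (v : 'I_n) : {set 'I_n} :=
  [set x | (#|[set y | closer ID v y x]| < K)%N].
End Defs.

Section Sampling.
Variable R : realType.
Variables (n f : nat).

Definition log2 (x : R) : R := ln x / ln 2.

Definition Qset (e : rel 'I_n) (ID : 'I_n -> nat) (i : nat) (v : 'I_n) : {set 'I_n} :=
  closestK e ID `|Num.ceil ((n%:R : R) `^ (i%:R / f%:R))|%N v.

Definition samp_p (c : R) (i : nat) : R :=
  Num.min ((c + 3) * (n%:R `^ (- (i%:R / f%:R))) * log2 n%:R) 1.

(* An outcome: w j is the sampled set A_{j+1}, for j < f-1. *)
Definition outcome := {ffun 'I_f.-1 -> {set 'I_n}}.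

Definition Aset (w : outcome) (i : nat) : {set 'I_n} :=
  match i with
  | 0 => setT
  | i'.+1 => [set v | [exists j : 'I_f.-1, (val j == i') && (v \in w j)]]
  end.

Definition weight (c : R) (w : outcome) : R :=
  \prod_(j : 'I_f.-1) \prod_(v : 'I_n)
     (if v \in w j then samp_p c j.+1 else 1 - samp_p c j.+1).

Definition good (e : rel 'I_n) (ID : 'I_n -> nat) (c : R) (w : outcome) : bool :=
  [forall i : 'I_f, forall v : 'I_n,
     (0 < (i : nat))%N ==> (Qset e ID i v :&: Aset w i != set0)] &&
  [forall i : 'I_f, forall v : 'I_n,
     (#|Qset e ID i.+1 v :&: Aset w i|%:Z
        <= Num.ceil (12 * (c + 3) * (n%:R `^ (1 / f%:R)) * log2 n%:R))%R].

Definition prob_good (e : rel 'I_n) (ID : 'I_n -> nat) (c : R) : R :=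
  \sum_(w : outcome | good e ID c w) weight c w.
End Sampling.

(* Main.v *)
Require Import Defs.
From HB Require Import structures.
From mathcomp Require Import all_boot all_order all_algebra.
From mathcomp Require Import reals sequences exp.
From mathcomp Require Import ring lra.
Import Order.TTheory GRing.Theory Num.Theory.
Section Rank.
Variables (n : nat) (e : rel 'I_n) (ID : 'I_n -> nat) (v : 'I_n).
Hypothesis IDinj : injective ID.
Local Notation cl := (closer e ID v).

Lemma cl_irr x : ~~ cl x x.
Proof. by rewrite /closer ltnn eqxx ltnn. Qed.

Lemma cl_trans x y z : cl x y -> cl y z -> cl x z.
Proof.
rewrite /closer.
case/orP=> [h1|/andP[/eqP h1 h2]]; case/orP=> [h3|/andP[/eqP h3 h4]].
- by rewrite (ltn_trans h1 h3).
- by rewrite -h3 h1.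
- by rewrite h1 h3.
- by rewrite h1 h3 eqxx (ltn_trans h2 h4) orbT.
Qed.

Lemma cl_total x y : x != y -> cl x y || cl y x.
Proof.
move=> nxy; rewrite /closer.
have hID : ID x != ID y by apply: contra nxy => /eqP /IDinj ->.
case: (ltngtP (dist e v x) (dist e v y)) => h //=.
by case: (ltngtP (ID x) (ID y)) hID => // ->; rewrite eqxx.
Qed.

Definition rank x := #|[set y | cl y x]|.

Lemma rank_lt x y : cl x y -> (rank x < rank y)%N.
Proof.
move=> hxy; apply: proper_card; apply/properP; split.
  by apply/subsetP=> z; rewrite !inE => h; apply: cl_trans h hxy.
by exists x; rewrite !inE // cl_irr.
Qed.

Lemma rank_inj : injective rank.
Proof.
move=> x y h; apply/eqP; apply/negPn/negP => nxy.
case/orP: (@cl_total x y nxy) => /rank_lt; rewrite h ltnn //.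
Qed.

Lemma rank_ltn x : (rank x < n)%N.
Proof.
rewrite -[n]card_ord; apply: proper_card; apply/properP; split.
  by apply/subsetP.
by exists x; rewrite !inE // cl_irr.
Qed.

Definition rk x : 'I_n := Ordinal (rank_ltn x).

Lemma rk_inj : injective rk.
Proof. by move=> x y [] /rank_inj. Qed.

Lemma card_closestK K : (K <= n)%N -> #|closestK e ID K v| = K.
Proof.
move=> Kn.
have -> : closestK e ID K v = rk @^-1: [set widen_ord Kn k | k in 'I_K].
  apply/setP=> x; rewrite !inE; apply/idP/imsetP.
    by move=> h; exists (Ordinal h) => //; apply: val_inj.
  case=> k _ /(congr1 val) /= h; move: (ltn_ord k); by rewrite -h /rk /=.
rewrite (@card_preimset _ rk _ rk_inj).
rewrite card_imset ?card_ord //; by move=> a b /(congr1 val) /= /val_inj.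
Qed.

Lemma card_closestK_le K : (#|closestK e ID K v| <= K)%N.
Proof.
case: (leqP K n) => h; first by rewrite card_closestK.
apply: leq_trans (ltnW h); rewrite -[X in (_ <= X)%N]card_ord; exact: max_card.
Qed.
End Rank.

Local Open Scope ring_scope.

Section Prob.
Variables (R : realType) (n f : nat) (c : R).
Definition Pf (j : 'I_f.-1) (x : bool) : R :=
  if x then samp_p n f c j.+1 else 1 - samp_p n f c j.+1.

Lemma marg (D b : 'I_f.-1 -> 'I_n -> bool) :
  \sum_(w : outcome n f | [forall j, forall v, D j v ==> ((v \in w j) == b j v)]) weight c w
  = \prod_j \prod_v (if D j v then Pf j (b j v) else 1).
Proof.
pose g j v (x : bool) := if D j v then (if x == b j v then Pf j x else 0) else Pf j x.
rewrite big_mkcond /=.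
transitivity (\sum_(w : outcome n f) \prod_j \prod_v g j v (v \in w j)).
  apply: eq_bigr => w _; case: ifP => [/forallP H | /negbT H].
    apply: eq_bigr => j _; apply: eq_bigr => v _.
    have := forallP (H j) v; rewrite /g; case: (D j v) => //= /eqP ->.
    by rewrite eqxx.
  move: H; rewrite negb_forall => /existsP [j]; rewrite negb_forall => /existsP [v].
  rewrite negb_imply => /andP [Dj nb].
  by rewrite (bigD1 j) //= (bigD1 v) //= /g Dj (negbTE nb) !mul0r.
have := @bigA_distr_bigA R 0 1 _ _ _ _ (fun j (S : {set 'I_n}) => \prod_v g j v (v \in S)).
rewrite /= => <-.
apply: eq_bigr => j _.
have := @bigA_distr R 0 1 _ _ _ (fun v => g j v true) (fun v => g j v false).
rewrite /= => E.
transitivity (\prod_v (g j v true + g j v false)).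
  rewrite E; apply: eq_bigr => S _; apply: eq_bigr => v _; by case: (v \in S).
apply: eq_bigr => v _; rewrite /g; case: (D j v); last by rewrite /Pf addrC subrK.
by case: (b j v) => /=; rewrite ?addr0 ?add0r.
Qed.

Lemma weight_sum1 : \sum_(w : outcome n f) weight c w = 1.
Proof.
have := marg (fun _ _ => false) (fun _ _ => false).
rewrite /= => E.
rewrite (eq_bigl (fun w : outcome n f => [forall j, forall v, false ==> ((v \in w j) == false)])).
  by rewrite E big1 // => j _; rewrite big1.
by move=> w; symmetry; apply/forallP => j; apply/forallP.
Qed.

Lemma prod_one_j (j : 'I_f.-1) (F : 'I_f.-1 -> 'I_n -> R) (Q : pred 'I_n) :
  \prod_(j' : 'I_f.-1) \prod_(v : 'I_n) (if (j' == j) && Q v then F j' v else 1)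
  = \prod_(v | Q v) F j v.
Proof.
rewrite (bigD1 j) //= [X in _ * X]big1 ?mulr1.
  by rewrite [RHS]big_mkcond; apply: eq_bigr => v _; rewrite eqxx.
by move=> j' /negbTE nj; rewrite big1 // => v _; rewrite nj.
Qed.

Lemma ev_empty (j : 'I_f.-1) (Q : {set 'I_n}) :
  \sum_(w : outcome n f | Q :&: w j == set0) weight c w
  = (1 - samp_p n f c j.+1) ^+ #|Q|.
Proof.
have := marg (fun j' v => (j' == j) && (v \in Q)) (fun _ _ => false).
rewrite (prod_one_j j (fun j' v => Pf j' _)) /= prodr_const /Pf /= => <-.
apply: eq_bigl => w; apply/idP/idP.
  move/eqP/setP => H; apply/forallP=> j'; apply/forallP=> v; apply/implyP.
  by case/andP=> [/eqP -> vQ]; have := H v; rewrite !inE vQ /= => ->.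
move=> H; apply/eqP/setP=> v; rewrite !inE; case vQ: (v \in Q) => //=.
by have := forallP (forallP H j) v; rewrite eqxx vQ /= => /eqP ->.
Qed.

Lemma ev_sub (j : 'I_f.-1) (T : {set 'I_n}) :
  \sum_(w : outcome n f | T \subset w j) weight c w
  = (samp_p n f c j.+1) ^+ #|T|.
Proof.
have := marg (fun j' v => (j' == j) && (v \in T)) (fun _ _ => true).
rewrite (prod_one_j j (fun j' v => Pf j' _)) /= prodr_const /Pf /= => <-.
apply: eq_bigl => w; apply/idP/idP.
  move/subsetP => H; apply/forallP=> j'; apply/forallP=> v; apply/implyP.
  by case/andP=> [/eqP -> vT]; rewrite H.
move=> H; apply/subsetP=> v vT.
by have := forallP (forallP H j) v; rewrite eqxx vT /= => /eqP ->.
Qed.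

Hypothesis p01 : forall i, 0 <= samp_p n f c i <= 1.

Lemma weight_ge0 (w : outcome n f) : 0 <= weight c w.
Proof.
apply: prodr_ge0 => j _; apply: prodr_ge0 => v _.
by case: (v \in w j); have /andP[h1 h2] := p01 j.+1; rewrite ?subr_ge0.
Qed.

Lemma ev_big (j : 'I_f.-1) (Q : {set 'I_n}) m :
  \sum_(w : outcome n f | (m <= #|Q :&: w j|)%N) weight c w
  <= ('C(#|Q|, m))%:R * (samp_p n f c j.+1) ^+ m.
Proof.
apply: (@le_trans _ _ (\sum_(w : outcome n f)
    \sum_(T : {set 'I_n} | (T \subset Q :&: w j) && (#|T| == m)) weight c w)).
  rewrite [X in X <= _]big_mkcond; apply: ler_sum => w _.
  rewrite (eq_bigl (fun T : {set 'I_n} => T \in [set T0 : {set 'I_n} | T0 \subset Q :&: w j & #|T0| == m])); last first.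
    by move=> T; rewrite inE.
  rewrite sumr_const cards_draws.
  case: ifP => h; last by apply: mulrn_wge0; apply: weight_ge0.
  rewrite -mulr_natr ler_peMr ?weight_ge0 //.
  by rewrite (ler_nat R 1) bin_gt0.
rewrite (eq_bigr (fun w : outcome n f => \sum_(T : {set 'I_n}) if ((T \subset Q) && (#|T| == m)) && (T \subset w j) then weight c w else 0)); last first.
  move=> w _; rewrite big_mkcond; apply: eq_bigr => T _.
  by rewrite subsetI; case: (T \subset Q); case: (T \subset w j); case: (#|T| == m).
rewrite exchange_big /=.
rewrite (eq_bigr (fun T : {set 'I_n} => if (T \subset Q) && (#|T| == m) then (samp_p n f c j.+1) ^+ m else 0)); last first.
  move=> T _; case: ifP => h /=; last by rewrite big1.
  rewrite -big_mkcond /= ev_sub; by case/andP: h => _ /eqP ->.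
rewrite -big_mkcond /=.
rewrite (eq_bigl (fun T : {set 'I_n} => T \in [set T0 : {set 'I_n} | T0 \subset Q & #|T0| == m])); last first.
  by move=> T; rewrite inE.
by rewrite sumr_const cards_draws mulr_natl.
Qed.
End Prob.

Lemma expR_small (R : realType) (t : R) : 0 <= t < 1 -> expR t * (1 - t) <= 1.
Proof.
case/andP=> t0 t1.
have h1 := expRxMexpNx_1 t.
have h2 := expR_ge1Dx (- t).
have h3 := expR_gt0 t.
nra.
Qed.

Lemma key (R : realType) (r : R) m : 0 <= r -> (0 < m)%N -> r <= m%:R / 6 ->
  r ^+ m / (m`!)%:R <= expR (- (m%:R / 3)).
Proof.
move=> r0 m0 rm.
have h30 : (0 : R) <= 3 by [].
have h := @expR_ge1Dxn R (3 * r) m.-1 (mulr_ge0 h30 r0).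
rewrite prednK in h; last by [].
rewrite exprMn in h.
have h2 : expR (3 * r) <= expR (m%:R / 2).
  rewrite ler_expR. clear h. lra.
have u2 : expR (1/2 : R) <= 2.
  have hh : 0 <= (1/2 : R) < 1 by apply/andP; split; lra.
  have := @expR_small R (1/2) hh; have := expR_gt0 (1/2 : R); lra.
have u3 : expR (1/3 : R) <= 3 / 2.
  have hh : 0 <= (1/3 : R) < 1 by apply/andP; split; lra.
  have := @expR_small R (1/3) hh; have := expR_gt0 (1/3 : R); lra.
have hu : expR (1/2 : R) * expR (1/3) <= 3.
  apply: (le_trans (ler_pM (expR_ge0 _) (expR_ge0 _) u2 u3)). clear. lra.
have hE : expR (m%:R / 2 : R) * expR (m%:R / 3) <= 3 ^+ m.
  have E2 : expR (m%:R / 2) = expR (1/2 : R) ^+ m by rewrite -expRM_natl mul1r.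
  have E3 : expR (m%:R / 3) = expR (1/3 : R) ^+ m by rewrite -expRM_natl mul1r.
  rewrite E2 E3 -exprMn; apply: lerXn2r => //; rewrite ?nnegrE ?mulr_ge0 ?expR_ge0 //.
have hf : 0 < (m`!)%:R :> R by rewrite ltr0n fact_gt0.
have h3 : 0 < (3 : R) ^+ m by apply: exprn_gt0.
set X := r ^+ m / (m`!)%:R.
have hX : 0 <= X by apply: divr_ge0; [apply: exprn_ge0 | apply: ltW].
have hX2 : X * 3 ^+ m <= expR (m%:R / 2 : R).
  apply: le_trans h2; apply: le_trans h.
  rewrite /X mulrAC -mulrA [_ * r ^+ m]mulrC mulrA.
  by rewrite lerDr.
have hX3 : X * expR (m%:R / 3 : R) <= 1.
  rewrite -(ler_pM2r h3) mul1r mulrAC.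
  apply: le_trans hE; rewrite ler_pM2r ?expR_gt0 //.
have e1 := expRxMexpNx_1 (m%:R / 3 : R).
have -> : X = X * expR (m%:R / 3) * expR (- (m%:R / 3)) by rewrite -mulrA e1 mulr1.
by rewrite -[leRHS]mul1r ler_pM2r ?expR_gt0.
Qed.


Lemma ffact_le_exp s m : (s ^_ m <= s ^ m)%N.
Proof.
elim: m s => [|m IH] s; first by rewrite ffactn0 expn0.
rewrite ffactnS expnS leq_mul2l; case: s => //= s; apply: leq_trans (IH s) _.
case: m {IH} => [|m]; first by [].
by rewrite leq_exp2r.
Qed.

Lemma arith1 (R : realFieldType) (sp Ap p Y mm : R) :
  sp <= Ap + p -> Ap <= Y -> p <= 1 -> 4 <= Y -> 12 * Y + 1 <= mm -> sp <= mm / 6.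
Proof. move=> *; lra. Qed.
Lemma arith2 (R : realFieldType) (u v Y mm : R) :
  u <= v -> v <= Y -> 4 <= Y -> 12 * Y + 1 <= mm -> - (mm / 3) <= - u.
Proof. move=> *; lra. Qed.

Section Analytic.
Variables (R : realType) (n f : nat) (c : R).
Hypotheses (f0 : (0 < f)%N) (fn : (f < n)%N) (c1 : 1 <= c).

Lemma n2 : (2 <= n)%N. Proof. by apply: leq_trans fn. Qed.
Let nR : (2 : R) <= n%:R. Proof. by rewrite (ler_nat R 2) n2. Qed.
Let n0 : (0 : R) < n%:R. Proof. by apply: lt_le_trans nR. Qed.

Ltac clra := have ? := c1; have ? := nR; lra.
Ltac cnra := have ? := c1; have ? := nR; nra.

Lemma ln2_gt0 : (0 : R) < ln 2. Proof. by apply: ln_gt0; lra. Qed.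
Lemma ln2_le1 : ln (2 : R) <= 1.
Proof. have := @le_ln1Dx R 1; rewrite (_ : 1 + 1 = 2) //; apply; lra. Qed.
Lemma lnn_ge : ln (2 : R) <= ln n%:R.
Proof. by rewrite ler_ln // posrE; lra. Qed.

Definition L : R := log2 n%:R.
Lemma L_ge1 : 1 <= L.
Proof.
rewrite /L /log2 ler_pdivlMr ?ln2_gt0 // mul1r; exact: lnn_ge.
Qed.
Lemma L_ge_ln : ln n%:R <= L.
Proof.
rewrite /L /log2 ler_pdivlMr ?ln2_gt0 //.
have h1 := ln2_le1; have h2 := lnn_ge; have h3 := ln2_gt0.
have h4 : 0 <= ln (n%:R : R) by lra.
have : 0 <= ln (n%:R : R) * (1 - ln 2) by apply: mulr_ge0; lra.
lra.
Qed.

Definition a (k : nat) : R := n%:R `^ (k%:R / f%:R).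
Lemma a_gt0 k : 0 < a k. Proof. by apply: powR_gt0. Qed.
Lemma a_ge1 k : 1 <= a k.
Proof.
rewrite /a -[X in X <= _](powRr0 n%:R); apply: ler_powR; first by have := nR; lra.
by apply: divr_ge0.
Qed.
Lemma a_le_n k : (k <= f)%N -> a k <= n%:R.
Proof.
move=> kf; rewrite /a -[X in _ <= X](@powRr1 _ n%:R); last by have := nR; lra.
apply: ler_powR; first by have := nR; lra.
rewrite ler_pdivrMr ?ltr0n // mul1r ler_nat //.
Qed.
Lemma aS k : a k.+1 = a k * a 1.
Proof.
rewrite /a -powRD; last by apply/implyP => _; rewrite pnatr_eq0 -lt0n (ltn_trans _ fn).
by rewrite -mulrDl -natrD addn1.
Qed.
Lemma powN k : n%:R `^ (- (k%:R / f%:R)) = (a k)^-1.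
Proof. by rewrite powRN. Qed.

Definition x (k : nat) : R := (c + 3) * (a k)^-1 * L.
Lemma samp_pE k : samp_p n f c k = Num.min (x k) 1.
Proof. by rewrite /samp_p powN. Qed.
Lemma x_ge0 k : 0 <= x k.
Proof.
rewrite /x; apply: mulr_ge0; last by have := L_ge1; lra.
apply: mulr_ge0; [idtac | rewrite invr_ge0 ltW // a_gt0].
- clra.
- done.
Qed.
Lemma p01 k : 0 <= samp_p n f c k <= 1.
Proof.
rewrite samp_pE; apply/andP; split; last by rewrite ge_min lexx orbT.
by rewrite le_min x_ge0 ler01.
Qed.
Lemma p_le_x k : samp_p n f c k <= x k.
Proof. by rewrite samp_pE ge_min lexx. Qed.
Lemma ax k : a k * x k = (c + 3) * L.
Proof.
have h := a_gt0 k; rewrite /x; field; lra.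
Qed.

Definition K (k : nat) : nat := `|Num.ceil (a k)|%N.
Lemma KE k : (K k)%:R = (Num.ceil (a k))%:~R :> R.
Proof.
rewrite /K natr_absz ger0_norm // ceil_ge0; have := a_ge1 k; lra.
Qed.
Lemma K_ge k : a k <= (K k)%:R.
Proof. by rewrite KE ceil_ge. Qed.
Lemma K_lt k : (K k)%:R < a k + 1.
Proof. rewrite KE; have := ceilB1_lt (a k); rewrite intrD /=; lra. Qed.
Lemma K_le_n k : (k <= f)%N -> (K k <= n)%N.
Proof.
move=> kf; rewrite -(ler_nat R); apply: (@le_trans _ _ ((Num.ceil (a k))%:~R)).
  by rewrite KE.
have : Num.ceil (a k) <= n%:Z by rewrite ceil_le_int; apply: a_le_n.
by rewrite -(ler_int R) => /le_trans; apply; rewrite pmulrn.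
Qed.
Lemma K_gt0 k : (0 < K k)%N.
Proof. by rewrite -(ltr_nat R); apply: lt_le_trans (K_ge k); have := a_ge1 k; lra. Qed.

Definition B : R := expR (- (c + 3) * ln n%:R).

Lemma c3_ge0 : 0 <= c + 3. Proof. clra. Qed.
Lemma L_ge0 : 0 <= L. Proof. have := L_ge1; clra. Qed.

Lemma ev1_bound k : (0 < k)%N -> (k < f)%N -> (1 - samp_p n f c k) ^+ K k <= B.
Proof.
move=> k0 kf.
rewrite samp_pE.
have Kk := K_ge k; have hx := x_ge0 k; have hax := ax k; have hL := L_ge_ln.
case: (leP (x k) 1) => hx1.
  apply: (@le_trans _ _ (expR (- x k) ^+ K k)).
    apply: lerXn2r; rewrite ?nnegrE ?expR_ge0 //; first by clra.
    by have := expR_ge1Dx (- x k); clra.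
  rewrite -expRM_natl /B ler_expR.
  have h1 : a k * x k <= (K k)%:R * x k by rewrite ler_wpM2r.
  have h2 : (c + 3) * ln n%:R <= (c + 3) * L by rewrite ler_wpM2l //; clra.
  clra.
rewrite subrr expr0n eqn0Ngt K_gt0 /=; exact: expR_ge0.
Qed.

Definition M : int := Num.ceil (12 * (c + 3) * (n%:R `^ (1 / f%:R)) * log2 n%:R).
Definition m : nat := (`|M|).+1.
Lemma M_ge0 : 0 <= M.
Proof.
rewrite /M ceil_ge0; apply: (@lt_le_trans _ _ 0); first by rewrite oppr_lt0.
apply: mulr_ge0; last by have := L_ge1; rewrite /L; clra.
apply: mulr_ge0; [clra | exact: powR_ge0].
Qed.
Definition Y : R := (c + 3) * a 1 * L.
Lemma Y_ge4 : 4 <= Y.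
Proof.
rewrite /Y; have h1 := a_ge1 1; have h2 := L_ge1.
have h3 : 4 <= c + 3 by clra.
have h4 : 1 <= a 1 * L by have := ler_pM ler01 ler01 h1 h2; rewrite mul1r.
have : (c + 3) * 1 <= (c + 3) * (a 1 * L) by rewrite ler_wpM2l //; clra.
rewrite -mulrA; clra.
Qed.
Lemma m_ge : 12 * Y + 1 <= m%:R.
Proof.
have E : (m%:R : R) = (`|M|%:R : R) + 1 by rewrite /m -addn1 natrD.
rewrite E lerD2r natr_absz ger0_norm ?M_ge0 //.
apply: le_trans (ceil_ge _); rewrite /Y /L /a.
by rewrite !mulrA mulr1n.
Qed.

Lemma ev2_bound k s : (0 < k)%N -> (s <= K k.+1)%N ->
  ('C(s, m))%:R * samp_p n f c k ^+ m <= B.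
Proof.
move=> k0 sK.
have /andP[p0 p1] := p01 k; have hpx := p_le_x k.
set p := samp_p n f c k in p0 p1 hpx *.
have hC : ('C(s, m))%:R <= (s%:R : R) ^+ m / (m`!)%:R.
  rewrite ler_pdivlMr ?ltr0n ?fact_gt0 // -natrX -natrM ler_nat bin_ffact.
  exact: ffact_le_exp.
apply: (@le_trans _ _ ((s%:R * p) ^+ m / (m`!)%:R)).
  rewrite exprMn mulrAC; apply: ler_wpM2r; first exact: exprn_ge0.
  exact: hC.
have hY := Y_ge4; have hm := m_ge.
have hr : s%:R * p <= m%:R / 6.
  have hs : (s%:R : R) <= a k * a 1 + 1.
    rewrite -aS; apply: le_trans (ltW (K_lt _)); by rewrite ler_nat.
  have h1 : s%:R * p <= (a k * a 1 + 1) * p by rewrite ler_wpM2r.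
  have h2 : a k * a 1 * p <= a k * a 1 * x k.
    by rewrite ler_wpM2l // mulr_ge0 // ltW // a_gt0.
  have h3 : a k * a 1 * x k = Y by rewrite /Y mulrAC ax mulrAC.
  rewrite mulrDl mul1r in h1; rewrite h3 in h2.
  exact: (@arith1 _ _ _ _ _ _ h1 h2 p1 hY hm).
have hr0 : 0 <= s%:R * p by apply: mulr_ge0.
apply: le_trans (@key R (s%:R * p) m hr0 (ltn0Sn _) hr) _.
rewrite /B ler_expR.
have h1 : (c + 3) * L <= Y.
  by rewrite /Y -mulrA ler_wpM2l ?ler_peMl ?a_ge1 ?c3_ge0 ?L_ge0.
have h2 : (c + 3) * ln n%:R <= (c + 3) * L.
  by rewrite ler_wpM2l ?L_ge_ln ?c3_ge0.
rewrite mulNr; exact: (@arith2 _ _ _ _ _ h2 h1 hY hm).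
Qed.

End Analytic.


Lemma Aset_S (n f : nat) (w : outcome n f) (j : 'I_f.-1) : Aset w j.+1 = w j.
Proof.
apply/setP => v; rewrite inE; apply/existsP/idP.
  by case=> j' /andP[/eqP h vin]; have -> : j = j' by apply: val_inj.
by move=> vin; exists j; rewrite eqxx.
Qed.

Lemma union_bound (R : realType) (T I : finType) (wt : T -> R) (P : pred T) (E : I -> pred T) :
  (forall t, 0 <= wt t) -> (forall t, P t -> exists k, E k t) ->
  \sum_(t | P t) wt t <= \sum_k \sum_(t | E k t) wt t.
Proof.
move=> w0 hPE.
rewrite (eq_bigr (fun k => \sum_t (if E k t then wt t else 0))); last by move=> k _; rewrite big_mkcond.
rewrite exchange_big /= [X in X <= _]big_mkcond /=; apply: ler_sum => t _.
case: ifP => Pt; last by apply: sumr_ge0 => k _; case: ifP => _ //; exact: w0.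
have [k Ek] := hPE t Pt.
rewrite (bigD1 k) //= Ek lerDl; apply: sumr_ge0 => k' _; case: ifP => _ //; exact: w0.
Qed.

Lemma event_bound (R : realType) (n f : nat) (e : rel 'I_n) (ID : 'I_n -> nat) (c : R)
  (IDinj : injective ID) (f0 : (0 < f)%N) (fn : (f < n)%N) (c1 : 1 <= c)
  (i : 'I_f) (v : 'I_n) (b : bool) :
  \sum_(w : outcome n f | if b then (0 < i)%N && (Qset R f e ID i v :&: Aset w i == set0)
                        else ~~ ((#|Qset R f e ID i.+1 v :&: Aset w i|)%:Z <= M R n f c))
     weight c w <= B R n c.
Proof.
have P01 := p01 R n f c f0 fn c1.
case: i => [[|i'] /= Hi]; case: b.
- by rewrite big_pred0 ?expR_ge0.
- rewrite big_pred0 ?expR_ge0 // => w; apply/negbTE; rewrite negbK setIT.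
  apply: (@le_trans _ _ (K R n f 1)%:Z).
    by rewrite lez_nat; apply: card_closestK_le.
  rewrite /K gez0_abs; last by rewrite ceil_ge0; have := a_ge1 R n f f0 fn 1; lra.
  rewrite /M; apply: le_ceil; rewrite /a /=.
  have h1 : 1 <= 12 * (c + 3) * L R n.
    apply: mulr_ege1; last exact: L_ge1 R n f f0 fn.
    by have := c1; lra.
  rewrite -mulrA [_ * log2 _]mulrC mulrA; apply: ler_peMl => //.
  exact: powR_ge0.
- have Hj : (i' < f.-1)%N by rewrite -ltnS prednK.
  set j : 'I_f.-1 := Ordinal Hj.
  rewrite (eq_bigl (fun w : outcome n f => Qset R f e ID i'.+1 v :&: w j == set0)); last first.
    by move=> w; have := @Aset_S n f w j; rewrite /= => ->.
  rewrite ev_empty /= (card_closestK _ _ _ _ IDinj); last exact: K_le_n R n f f0 fn _ (ltnW Hi).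
  exact: (ev1_bound R n f c f0 fn c1 i'.+1 (ltn0Sn _) Hi).
- have Hj : (i' < f.-1)%N by rewrite -ltnS prednK.
  set j : 'I_f.-1 := Ordinal Hj.
  rewrite (eq_bigl (fun w : outcome n f => (m R n f c <= #|Qset R f e ID i'.+2 v :&: w j|)%N)); last first.
    move=> w; have := @Aset_S n f w j; rewrite /= => ->.
    rewrite -[M R n f c]gez0_abs ?(M_ge0 R n f c f0 fn c1) // lez_nat -ltnNge //.
  apply: le_trans (ev_big R n f c P01 j _ _) _.
  apply: (ev2_bound R n f c f0 fn c1) => //.
  exact: card_closestK_le.
Qed.

Lemma final_ineq (R : realType) (n f : nat) (c : R) (f0 : (0 < f)%N) (fn : (f < n)%N) :
  B R n c *+ #|{: 'I_f * 'I_n * bool}| <= (n%:R : R) `^ (- c).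
Proof.
have n2 : (2 <= n)%N by apply: leq_trans fn.
have n0 : (0 < n)%N by apply: leq_trans n2.
have nR : (0 : R) < n%:R by rewrite ltr0n.
rewrite !card_prod !card_ord card_bool -[X in X <= _]mulr_natr.
have E : (n%:R : R) `^ (- c) = B R n c * (n%:R ^+ 3).
  rewrite /powR pnatr_eq0 (gtn_eqF n0) /B.
  have -> : (n%:R : R) ^+ 3 = expR (3%:R * ln n%:R) by rewrite expRM_natl lnK // posrE.
  by rewrite -expRD; congr expR; ring.
apply: (@le_trans _ _ (B R n c * n%:R ^+ 3)); last by rewrite E.
apply: ler_wpM2l; first exact: expR_ge0.
rewrite -natrX ler_nat.
apply: (@leq_trans (n * n * n)).
  by apply: leq_mul => //; apply: leq_mul => //; exact: ltnW.
by rewrite !expnS expn0 muln1 mulnA.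
Qed.

Theorem mainTheorem8 (R : realType) (n f : nat) (e : rel 'I_n) (ID : 'I_n -> nat)
  (c : R) :
  symmetric e -> irreflexive e -> injective ID ->
  (0 < f)%N -> (f < n)%N -> 1 <= c ->
  1 - (n%:R : R) `^ (- c) <= prob_good f e ID c.
Proof.
move=> esym eirr IDinj f0 fn c1.
have P01 := p01 R n f c f0 fn c1.
have tot := weight_sum1 R n f c.
rewrite (bigID (good e ID c)) /= in tot.
rewrite /prob_good.
pose E (k : 'I_f * 'I_n * bool) (w : outcome n f) :=
  let: (i, v, b) := k in
  if b then (0 < i)%N && (Qset R f e ID i v :&: Aset w i == set0)
  else ~~ ((#|Qset R f e ID i.+1 v :&: Aset w i|)%:Z <= M R n f c).
have hbad : \sum_(w : outcome n f | ~~ good e ID c w) weight c w <= (n%:R : R) `^ (- c).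
  have UB := @union_bound R _ _ _ (fun w => ~~ good e ID c w) E (weight_ge0 R n f c P01).
  have EX : forall w : outcome n f, ~~ good e ID c w -> exists k, E k w.
    move=> w; rewrite negb_and => /orP [] /forallPn [i] /forallPn [v] H.
      exists (i, v, true); move: H; rewrite /E negb_imply negbK //.
    by exists (i, v, false).
  apply: le_trans (UB EX) _.
  apply: le_trans (final_ineq R n f c f0 fn).
  rewrite -sumr_const; apply: ler_sum => -[[i v] b] _.
  exact: event_bound.
move: tot hbad; set G := \sum_(w | good e ID c w) _; set Bd := \sum_(w | _) _.
move=> tot hbad; lra.
Qed.
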